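(* Let $G$ be a graph on $n$ vertices, $t\ge 1$ an integer, and let $G'$, $\alpha$ be as in the construction below; let $k=n+t+1$, $\ell=2t+2t^2$, and let $\beta$ be defined by $\beta(v)=\alpha(v)$ for $v\in V_G\cup V_C$ and $\beta(b^i_j)=n+j$ for $i,j\in\{1,\ldots,t\}$. If $G$ has an independent set of size at least $t-1$, then $\mathcal{C}_k(G')$ contains a path from $\alpha$ to $\beta$ of length at most $\ell$.
   Context: Construction: with $V(G)=\{v_1,\ldots,v_n\}$, $V(G')=V_G\cup V_B\cup V_C$, where $V_G=\{g_1,\ldots,g_n\}$ induces a copy of $G$ ($g_ig_j$ an edge iff $v_iv_j\in E(G)$); $V_B=\{b^i_j\mid i,j\in\{1,\ldots,t\}\}$ with $b^i_jb^{i'}_{j'}$ an edge iff $i\ne i'$ and $j\ne j'$; all edges between $V_G$ and $V_B$ are present; $V_C=C_1\cup\cdots\cup C_{n+t+1}$ with the $C_i$ pairwise disjoint independent sets of size $2t+2t^2$ and no edges among vertices of $V_C$; each $g_i$ is adjacent to all of $V_C\setminus(C_i\cup C_{n+t+1})$; each vertex of $V_B$ is adjacent to all of $C_{n+t+1}$; no other edges. $\alpha(g_i)=i$, $\alpha(c)=i$ for $c\in C_i$, $\alpha(b^i_j)=n+i$. A $k$-coloring is a map $V\to\{1,\ldots,k\}$ with adjacent vertices colored differently; $\mathcal{C}_k(G')$ is the graph on the $k$-colorings of $G'$, two adjacent iff they differ on exactly one vertex. *)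

(* Defs.v *)
From mathcomp Require Import all_boot.
Set Implicit Arguments. Unset Strict Implicit. Unset Printing Implicit Defensive.

(* Vertices of G' (all indices 0-based):
   inl (inl a)        = g_{a+1}           (a : 'I_n)
   inl (inr (i, j))   = b^{i+1}_{j+1}     (i, j : 'I_t)
   inr (m, x)         = x-th element of C_{m+1}  (m : 'I_(n+t+1), x : 'I_(2t+2t^2)) *)
Definition Gvtx (n t : nat) : finType :=
  ('I_n + ('I_t * 'I_t) + ('I_(n + t + 1) * 'I_(2 * t + 2 * t ^ 2)))%type.

Definition Gedge (n t : nat) (e : rel 'I_n) (x y : Gvtx n t) : bool :=
  match x, y with
  | inl (inl a), inl (inl b) => e a b
  | inl (inl _), inl (inr _) => true
  | inl (inr _), inl (inl _) => true
  | inl (inr (i, j)), inl (inr (i', j')) => (i != i') && (j != j')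
  | inl (inl a), inr (m, _) => (val m != val a) && (val m != n + t)
  | inr (m, _), inl (inl a) => (val m != val a) && (val m != n + t)
  | inl (inr _), inr (m, _) => val m == n + t
  | inr (m, _), inl (inr _) => val m == n + t
  | inr _, inr _ => false
  end.

Definition alpha (n t : nat) (v : Gvtx n t) : nat :=
  match v with
  | inl (inl a) => val a + 1
  | inl (inr (i, _)) => n + (val i + 1)
  | inr (m, _) => val m + 1
  end.

Definition beta (n t : nat) (v : Gvtx n t) : nat :=
  match v with
  | inl (inl a) => val a + 1
  | inl (inr (_, j)) => n + (val j + 1)
  | inr (m, _) => val m + 1
  end.

Definition is_kcoloring (V : finType) (E : rel V) (k : nat) (c : V -> nat) : Prop :=
  (forall v, 1 <= c v <= k) /\ (forall x y, E x y -> c x != c y).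

Definition differ_one (V : finType) (c c' : V -> nat) : Prop :=
  #|[pred v : V | c v != c' v]| = 1.

Definition recolor_walk (V : finType) (E : rel V) (k : nat)
    (c0 c1 : V -> nat) (m : nat) (p : nat -> V -> nat) : Prop :=
  (forall v, p 0 v = c0 v) /\ (forall v, p m v = c1 v) /\
  (forall i, i <= m -> is_kcoloring E k (p i)) /\
  (forall i, i < m -> differ_one (p i) (p i.+1)).

(* Main.v *)
Require Import Defs.
From mathcomp Require Import all_boot zify.
Set Implicit Arguments. Unset Strict Implicit.

Definition reach (V : finType) (E : rel V) (k : nat) (c0 c1 : V -> nat) (m : nat) :=
  exists p, recolor_walk E k c0 c1 m p.

Lemma kcol_ext (V : finType) (E : rel V) k (c c' : V -> nat) :
  c =1 c' -> is_kcoloring E k c -> is_kcoloring E k c'.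
Proof. by move=> h [h1 h2]; split=> [v|x y /h2]; rewrite -!h. Qed.

Lemma differ_ext (V : finType) (c1 c1' c2 c2' : V -> nat) :
  c1 =1 c1' -> c2 =1 c2' -> differ_one c1 c2 -> differ_one c1' c2'.
Proof.
move=> h1 h2; rewrite /differ_one => <-; apply: eq_card => v /=.
by rewrite !inE h1 h2.
Qed.

Lemma reach_ext (V : finType) (E : rel V) k (c0 c1 c0' c1' : V -> nat) m :
  c0 =1 c0' -> c1 =1 c1' -> reach E k c0 c1 m -> reach E k c0' c1' m.
Proof.
move=> h0 h1 [p [p0 [pm [pc pd]]]]; exists p; split; last split => //.
- by move=> v; rewrite p0 h0.
- by move=> v; rewrite pm h1.
Qed.

Lemma reach_cat (V : finType) (E : rel V) k (c0 c1 c2 : V -> nat) m1 m2 :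
  reach E k c0 c1 m1 -> reach E k c1 c2 m2 -> reach E k c0 c2 (m1 + m2).
Proof.
move=> [p1 [p10 [p1m [p1c p1d]]]] [p2 [p20 [p2m [p2c p2d]]]].
exists (fun i => if i <= m1 then p1 i else p2 (i - m1)); split; last split; last split.
- by move=> v /=; rewrite p10.
- move=> v /=; case: ifP => h.
    have hm2 : m2 = 0 by lia.
    by subst m2; rewrite addn0 p1m -p20 p2m.
  by rewrite addKn p2m.
- move=> i hi /=; case: ifP => h; first exact: p1c.
  apply: p2c; lia.
- move=> i hi /=; case: (ltnP i m1) => h.
  + have h1 : i <= m1 by lia.
    rewrite h1 ?h; exact: p1d.
  + case: (eqVneq i m1) => [hi1|hne].
    * subst i; rewrite leqnn ?ltnn ?subSnn.
      apply: (differ_ext (c1 := p2 0)) => //; last by apply: p2d; lia.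
      by move=> v; rewrite p20 -p1m.
    * have h' : ~~ (i <= m1) by lia.
      have h'' : ~~ (i < m1) by lia.
      rewrite (negbTE h') ?(negbTE h'').
      have -> : i.+1 - m1 = (i - m1).+1 by lia.
      apply: p2d; lia.
Qed.

Lemma reach_list (V : finType) (E : rel V) k (c0 f : V -> nat) (vs : seq V) :
  uniq vs -> (forall v, v \in vs -> f v != c0 v) ->
  (forall v, v \notin vs -> f v = c0 v) ->
  (forall X : pred V, (forall v, X v -> v \in vs) ->
      is_kcoloring E k (fun v => if X v then f v else c0 v)) ->
  reach E k c0 f (size vs).
Proof.
move=> hu hne hoff hmix.
exists (fun i v => if v \in take i vs then f v else c0 v); split; last split; last split.
- by move=> v; case: vs {hu hne hoff hmix}.
- move=> v /=; rewrite take_size; case: ifP => // /negbT h; by rewrite hoff.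
- move=> i _; apply: hmix => v; exact: mem_take.
- move=> i hi.
  have [x0 _] : exists x0 : V, True by case: vs hi {hu hne hoff hmix} => // x s _; exists x.
  rewrite /differ_one (take_nth x0 hi).
  have hn : nth x0 vs i \notin take i vs.
    by rewrite in_take ?mem_nth // index_uniq // ltnn.
  rewrite -(card1 (nth x0 vs i)); apply: eq_card => v; rewrite !inE mem_rcons inE.
  case: (eqVneq v (nth x0 vs i)) => [->|hv] /=.
  + by rewrite (negbTE hn) eq_sym hne // mem_nth.
  + by case: ifP => _; rewrite eqxx.
Qed.

Lemma crit n T (e : rel 'I_n) (c : Gvtx n T.+1 -> nat) :
  irreflexive e ->
  (forall m z, c (inr (m,z)) = m + 1) ->
  (forall a, c (inl (inl a)) = a + 1 \/ c (inl (inl a)) = n + T.+1 + 1) ->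
  (forall a b, e a b -> c (inl (inl a)) = n+T.+1+1 -> c (inl (inl b)) = n+T.+1+1 -> False) ->
  (forall x, n < c (inl (inr x)) <= n + T.+1 \/
             exists a : 'I_n, c (inl (inr x)) = a + 1 /\ c (inl (inl a)) = n+T.+1+1) ->
  (forall x y, Gedge e (inl (inr x)) (inl (inr y)) -> c (inl (inr x)) != c (inl (inr y))) ->
  is_kcoloring (Gedge e) (n + T.+1 + 1) c.
Proof.
move=> irr hC hg hgg hb hbb.
have gb : forall a x, c (inl (inl a)) != c (inl (inr x)).
  move=> a x; have la := ltn_ord a.
  case: (hb x) => [h|[a' [h1 h2]]]; case: (hg a) => h'; rewrite ?h1 h'; try lia.
  { apply/eqP => ha; have ? : a = a' by apply: ord_inj; lia.
    subst a'; rewrite h2 in h'; lia. }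
  { have la' := ltn_ord a'; lia. }
split.
- move=> [[a|x]|[m z]].
  + have la := ltn_ord a; case: (hg a) => ->; lia.
  + move: (hb x); set u := c _ => -[|[a [-> _]]]; first lia; have la := ltn_ord a; lia.
  + rewrite hC; have lm := ltn_ord m; lia.
- move=> [[a|[i j]]|[m z]] [[b|[i' j']]|[m' z']] //=.
  + move=> hab; case: (hg a) => ha; case: (hg b) => hb'; rewrite ha hb'.
    * apply/eqP => hh; have : a = b by apply: ord_inj; lia.
      by move=> ?; subst b; rewrite irr in hab.
    * have la := ltn_ord a; lia.
    * have lb := ltn_ord b; lia.
    * by case: (hgg _ _ hab ha hb').
  + move=> /andP [/eqP h1 /eqP h2]; rewrite hC; case: (hg a) => ->; lia.
  + by move=> _; rewrite eq_sym; exact: gb.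
  + move=> h; exact: (hbb (i, j) (i', j') h).
  + move=> /eqP h1; rewrite hC; move: (hb (i, j)); set u := c _ => -[|[a [-> _]]]; first lia; have la := ltn_ord a; lia.
  + move=> /andP [/eqP h1 /eqP h2]; rewrite hC; case: (hg b) => ->; lia.
  + move=> /eqP h1; rewrite hC; move: (hb (i', j')); set u := c _ => -[|[a [-> _]]]; first lia; have la := ltn_ord a; lia.
Qed.

Definition sp n (L : seq 'I_n) (r : nat) : nat := nth 0 (map val L) r.

Definition cA n T (L : seq 'I_n) (v : Gvtx n T.+1) : nat :=
  match v with inl (inl a) => if a \in L then n + T.+1 + 1 else a + 1 | _ => alpha v end.
Definition cB n T (L : seq 'I_n) (v : Gvtx n T.+1) : nat :=
  match v with inl (inr (r, c)) => if r < T then sp L r + 1 else n + (r + 1) | _ => cA L v end.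
Definition cC1 n T (L : seq 'I_n) (v : Gvtx n T.+1) : nat :=
  match v with inl (inr (r, c)) => if c < T then n + (c + 1)
               else if r < T then sp L r + 1 else n + (r + 1) | _ => cA L v end.
Definition cC2 n T (L : seq 'I_n) (v : Gvtx n T.+1) : nat :=
  match v with inl (inr (r, c)) => n + (c + 1) | _ => cA L v end.

Definition vsA n T (L : seq 'I_n) : seq (Gvtx n T.+1) := [seq inl (inl a) | a <- L].
Definition vsP n T (P : pred ('I_T.+1 * 'I_T.+1)) : seq (Gvtx n T.+1) :=
  [seq inl (inr x) | x <- enum P].

Lemma mem_vsA n T (L : seq 'I_n) (v : Gvtx n T.+1) :
  (v \in vsA T L) = match v with inl (inl a) => a \in L | _ => false end.
Proof.
case: v => [[a|x]|y].
- by rewrite mem_map // => ? ? [->].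
- by apply/mapP => -[].
- by apply/mapP => -[].
Qed.

Lemma mem_vsP n T (P : pred ('I_T.+1 * 'I_T.+1)) (v : Gvtx n T.+1) :
  (v \in vsP n P) = match v with inl (inr x) => P x | _ => false end.
Proof.
case: v => [[a|x]|y].
- by apply/mapP => -[].
- by rewrite mem_map ?mem_enum // => ? ? [->].
- by apply/mapP => -[].
Qed.

Lemma uniq_vsA n T (L : seq 'I_n) : uniq L -> uniq (vsA T L).
Proof. by move=> u; rewrite map_inj_uniq // => ? ? [->]. Qed.

Lemma uniq_vsP n T (P : pred ('I_T.+1 * 'I_T.+1)) : uniq (vsP n P).
Proof. by rewrite map_inj_uniq ?enum_uniq // => ? ? [->]. Qed.

Lemma size_vsP n T (P : pred ('I_T.+1 * 'I_T.+1)) : size (vsP n P) = #|P|.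
Proof. by rewrite size_map cardE. Qed.

Section SP.
Lemma spn n (L : seq 'I_n) T r : size L = T -> r < T -> sp L r < n.
Proof.
move=> hs hr; have : sp L r \in map val L by apply: mem_nth; rewrite size_map hs.
by case/mapP => a _ ->; exact: ltn_ord.
Qed.

Lemma sp_neq n (L : seq 'I_n) T r r' : uniq L -> size L = T -> r < T -> r' < T ->
  r != r' -> sp L r != sp L r'.
Proof.
move=> u hs hr hr' hne; rewrite /sp nth_uniq ?size_map ?hs //.
by rewrite map_inj_uniq //; exact: val_inj.
Qed.

Lemma sp_mem n (L : seq 'I_n) T r : size L = T -> r < T ->
  exists a : 'I_n, a \in L /\ (a : nat) = sp L r.
Proof.
move=> hs hr; have : sp L r \in map val L by apply: mem_nth; rewrite size_map hs.
by case/mapP => a ha ->; exists a.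
Qed.
End SP.

Lemma phaseA n T e (L : seq 'I_n) : irreflexive e -> uniq L -> size L = T ->
  {in L &, forall x y, ~~ e x y} ->
  reach (Gedge e) (n + T.+1 + 1) (@alpha n T.+1) (cA L) (size (vsA T L)).
Proof.
move=> irr u hs hLi; apply: reach_list.
- exact: uniq_vsA.
- move=> [[a|x]|y]; rewrite mem_vsA // => ha /=; rewrite ha; have := ltn_ord a; lia.
- by move=> [[a|x]|y]; rewrite mem_vsA //= => /negbTE ->.
- move=> X hX; apply: crit => //.
  + by move=> m z /=; case: ifP.
  + move=> a /=; case: ifP => _; last by left.
    by case: ifP; [right|left].
  + have key : forall a : 'I_n, (if X (inl (inl a)) then cA (T:=T) L (inl (inl a)) else @alpha n T.+1 (inl (inl a)))
        = n + T.+1 + 1 -> a \in L.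
      move=> a; have := ltn_ord a; case: ifP => _ /=; last lia.
      case: ifP => //; lia.
    move=> a b hab /key ha /key hb.
    by have := hLi _ _ ha hb; rewrite hab.
  + move=> [r c] /=; rewrite if_same; left; have := ltn_ord r; lia.
  + move=> [r c] [r' c'] /= /andP [h1 h2]; rewrite !if_same.
    apply/eqP => h; move/eqP: h1; apply; apply: ord_inj; lia.
Qed.

Lemma crit2 n T e (L : seq 'I_n) (c : Gvtx n T.+1 -> nat) :
  irreflexive e -> size L = T -> {in L &, forall x y, ~~ e x y} ->
  (forall v, match v with inl (inr _) => True | _ => c v = cA L v end) ->
  (forall x, n < c (inl (inr x)) <= n + T.+1 \/
             exists r, r < T /\ c (inl (inr x)) = sp L r + 1) ->
  (forall x y, Gedge e (inl (inr x)) (inl (inr y)) -> c (inl (inr x)) != c (inl (inr y))) ->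
  is_kcoloring (Gedge e) (n + T.+1 + 1) c.
Proof.
move=> irr hs hLi hc hb hbb; apply: crit => //.
- by move=> m z; rewrite (hc (inr (m, z))).
- move=> a; rewrite (hc (inl (inl a))) /=; case: ifP; by [right|left].
- move=> a b hab; rewrite (hc (inl (inl a))) (hc (inl (inl b))) /=.
  have la := ltn_ord a; have lb := ltn_ord b.
  case: ifP => ha; last lia; case: ifP => hb'; last lia.
  by have := hLi _ _ ha hb'; rewrite hab.
- move=> x; case: (hb x) => [|[r [hr ->]]]; first by left.
  right; have [a [ha hva]] := sp_mem hs hr; exists a; split; first by rewrite hva.
  by rewrite (hc (inl (inl a))) /= ha.
Qed.

Ltac spf L u hs r r' :=
  have := ltn_ord r; have := ltn_ord r';
  have := @spn _ L _ r hs; have := @spn _ L _ r' hs;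
  have := @sp_neq _ L _ r r' u hs.

Lemma phaseB n T e (L : seq 'I_n) : irreflexive e -> uniq L -> size L = T ->
  {in L &, forall x y, ~~ e x y} ->
  reach (Gedge e) (n + T.+1 + 1) (cA (T:=T) L) (cB L)
    (size (vsP n [pred x : 'I_T.+1 * 'I_T.+1 | x.1 < T])).
Proof.
move=> irr u hs hLi; apply: reach_list.
- exact: uniq_vsP.
- move=> [[a|[r c]]|y]; rewrite mem_vsP //= => hr; rewrite hr.
  have := spn hs hr; lia.
- by move=> [[a|[r c]]|y]; rewrite mem_vsP //= => /negbTE ->.
- move=> X hX; apply: (crit2 (L:=L)) => //.
  + by move=> [[a|x]|y] //=; rewrite if_same.
  + move=> [r c] /=; case: ifP => _; last by left; have := ltn_ord r; lia.
    case: ifP => hr; last by left; have := ltn_ord r; lia.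
    by right; exists r.
  + move=> [r c] [r' c'] /= /andP [h1 h2].
    spf L u hs r r'.
    have : (r : nat) != r' by [].
    by repeat case: ifP => ?; lia.
Qed.

Ltac bcase := repeat case: ifP => ?; first [ by right; eexists; split; [eassumption|reflexivity]
                                            | left; lia ].

Lemma phaseC1 n T e (L : seq 'I_n) : irreflexive e -> uniq L -> size L = T ->
  {in L &, forall x y, ~~ e x y} ->
  reach (Gedge e) (n + T.+1 + 1) (cB (T:=T) L) (cC1 L)
    (size (vsP n [pred x : 'I_T.+1 * 'I_T.+1 | x.2 < T])).
Proof.
move=> irr u hs hLi; apply: reach_list.
- exact: uniq_vsP.
- move=> [[a|[r c]]|y]; rewrite mem_vsP //= => hc; rewrite hc.
  have := @spn _ L _ r hs; have := ltn_ord r; case: ifP => ?; lia.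
- by move=> [[a|[r c]]|y]; rewrite mem_vsP //= => /negbTE ->.
- move=> X hX; apply: (crit2 (L:=L)) => //.
  + by move=> [[a|x]|y] //=; rewrite if_same.
  + move=> [r c] /=; have := ltn_ord r; have := ltn_ord c; bcase.
  + move=> [r c] [r' c'] /= /andP [h1 h2].
    spf L u hs r r'; have := ltn_ord c; have := ltn_ord c'.
    have : (r : nat) != r' by [].
    have : (c : nat) != c' by [].
    by repeat case: ifP => ?; lia.
Qed.

Lemma phaseC2 n T e (L : seq 'I_n) : irreflexive e -> uniq L -> size L = T ->
  {in L &, forall x y, ~~ e x y} ->
  reach (Gedge e) (n + T.+1 + 1) (cC1 (T:=T) L) (cC2 L)
    (size (vsP n [pred x : 'I_T.+1 * 'I_T.+1 | (x.1 < T) && ~~ (x.2 < T)])).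
Proof.
move=> irr u hs hLi; apply: reach_list.
- exact: uniq_vsP.
- move=> [[a|[r c]]|y]; rewrite mem_vsP //= => /andP [hr hc]; rewrite (negbTE hc) hr.
  have := @spn _ L _ r hs; lia.
- move=> [[a|[r c]]|y]; rewrite mem_vsP //= => h.
  have := ltn_ord r; have := ltn_ord c; move: h; by repeat case: ifP => ?; lia.
- move=> X hX; apply: (crit2 (L:=L)) => //.
  + by move=> [[a|x]|y] //=; rewrite if_same.
  + move=> [r c] /=; have := ltn_ord r; have := ltn_ord c; bcase.
  + move=> [r c] [r' c'] /= /andP [h1 h2].
    spf L u hs r r'; have := ltn_ord c; have := ltn_ord c'.
    have : (r : nat) != r' by [].
    have : (c : nat) != c' by [].
    by repeat case: ifP => ?; lia.
Qed.

Lemma phaseD n T e (L : seq 'I_n) : irreflexive e -> uniq L -> size L = T ->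
  {in L &, forall x y, ~~ e x y} ->
  reach (Gedge e) (n + T.+1 + 1) (cC2 L) (@beta n T.+1) (size (vsA T L)).
Proof.
move=> irr u hs hLi; apply: reach_list.
- exact: uniq_vsA.
- move=> [[a|x]|y]; rewrite mem_vsA // => ha /=; rewrite ha; have := ltn_ord a; lia.
- by move=> [[a|[r c]]|y]; rewrite mem_vsA //= => /negbTE ->.
- move=> X hX; apply: crit => //.
  + by move=> m z /=; case: ifP.
  + move=> a /=; case: ifP => _; first by left.
    by case: ifP; [right|left].
  + have key : forall a : 'I_n, (if X (inl (inl a)) then @beta n T.+1 (inl (inl a))
        else cC2 (T:=T) L (inl (inl a))) = n + T.+1 + 1 -> a \in L.
      move=> a; have := ltn_ord a; case: ifP => _ /=; first lia.
      case: ifP => //; lia.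
    move=> a b hab /key ha /key hb.
    by have := hLi _ _ ha hb; rewrite hab.
  + move=> [r c] /=; rewrite if_same; left; have := ltn_ord c; lia.
  + move=> [r c] [r' c'] /= /andP [h1 h2]; rewrite !if_same.
    apply/eqP => h; move/eqP: h2; apply; apply: ord_inj; lia.
Qed.

Lemma cardlt T : #|[pred r : 'I_T.+1 | r < T]| = T.
Proof.
have := cardsC1 (@ord_max T); rewrite card_ord /= => h.
rewrite -[RHS]h.
apply: eq_card => r; rewrite !inE -val_eqE /=.
have := ltn_ord r; lia.
Qed.

Lemma cardge T : #|[pred r : 'I_T.+1 | ~~ (r < T)]| = 1.
Proof.
rewrite -(cards1 (@ord_max T)); apply: eq_card => r; rewrite !inE -val_eqE /=.
have := ltn_ord r; lia.
Qed.

Lemma cardB T : #|[pred x : 'I_T.+1 * 'I_T.+1 | x.1 < T]| = T * T.+1.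
Proof.
have -> : #|[pred x : 'I_T.+1 * 'I_T.+1 | x.1 < T]| =
          #|[predX [pred r : 'I_T.+1 | r < T] & [pred c : 'I_T.+1 | true]]|.
  by apply: eq_card => -[r c]; rewrite !inE /= ?andbT.
by rewrite cardX cardlt card_ord.
Qed.

Lemma cardC1 T : #|[pred x : 'I_T.+1 * 'I_T.+1 | x.2 < T]| = T.+1 * T.
Proof.
have -> : #|[pred x : 'I_T.+1 * 'I_T.+1 | x.2 < T]| =
          #|[predX [pred c : 'I_T.+1 | true] & [pred r : 'I_T.+1 | r < T]]|.
  by apply: eq_card => -[r c]; rewrite !inE /= ?andbT.
by rewrite cardX cardlt card_ord.
Qed.

Lemma cardC2 T : #|[pred x : 'I_T.+1 * 'I_T.+1 | (x.1 < T) && ~~ (x.2 < T)]| = T * 1.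
Proof.
have -> : #|[pred x : 'I_T.+1 * 'I_T.+1 | (x.1 < T) && ~~ (x.2 < T)]| =
          #|[predX [pred r : 'I_T.+1 | r < T] & [pred r : 'I_T.+1 | ~~ (r < T)]]|.
  by apply: eq_card => -[r c]; rewrite !inE /= ?andbT.
by rewrite cardX cardlt cardge.
Qed.

Unset Implicit Arguments.
Set Strict Implicit.

Theorem mainTheorem3 (n t : nat) (e : rel 'I_n)
  (e_sym : symmetric e) (e_irr : irreflexive e) (ht : 1 <= t)
  (hind : exists S : {set 'I_n},
            t - 1 <= #|S| /\ {in S &, forall x y, ~~ e x y}) :
  exists (m : nat) (p : nat -> Gvtx n t -> nat),
    m <= 2 * t + 2 * t ^ 2 /\
    recolor_walk (@Gedge n t e) (n + t + 1) (@alpha n t) (@beta n t) m p.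
Proof.
case: t ht hind => [//|T] _ [S [hS hSi]].
pose L := take T (enum S).
have u : uniq L by apply: take_uniq; exact: enum_uniq.
have hs : size L = T by apply: size_takel; rewrite -cardE; lia.
have hLi : {in L &, forall x y, ~~ e x y}.
  move=> x y /mem_take hx /mem_take hy; by apply: hSi; rewrite -mem_enum.
have := reach_cat (reach_cat (reach_cat (reach_cat
   (phaseA e_irr u hs hLi) (phaseB e_irr u hs hLi)) (phaseC1 e_irr u hs hLi))
   (phaseC2 e_irr u hs hLi)) (phaseD e_irr u hs hLi).
case=> p hp; eexists; exists p; split; last exact: hp.
rewrite !size_vsP /vsA size_map hs cardB cardC1 cardC2.
nia.
Qed.
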